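(* Let $X$ be a separable Banach space, $X\ne\{0\}$, and let $E_X$, $(e^X_n)$, $Q_X$ be as in the context. Let $(v_k)$ be a bounded block sequence of $(e^X_n)$. If $(Q_X(v_k))$ is weakly null in $X$, then $(v_k)$ is weakly null in $E_X$.
   Context: Given a separable Banach space $X\neq\{0\}$ and a sequence $(x_n)$ (repetitions allowed) in the unit sphere of $X$ which is norm dense in the unit sphere, $E_X$ is the completion of $c_{00}(\mathbb{N})$ under the norm $\|z\|_{E_X}=\sup_{m\in\mathbb{N}}\|\sum_{n=0}^m z(n)x_n\|_X$; $(e^X_n)$ is the standard unit vector basis of $c_{00}(\mathbb{N})$ viewed in $E_X$ (a normalized monotone Schauder basis of $E_X$); $Q_X:E_X\to X$ is the unique bounded linear operator with $Q_X(e^X_n)=x_n$. *)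

(* Defs.v *)
From Stdlib Require Import Reals Lra Lia.
Open Scope R_scope.

Record NormedSpace := {
  carrier :> Type;
  vzero : carrier;
  vadd : carrier -> carrier -> carrier;
  vopp : carrier -> carrier;
  vscal : R -> carrier -> carrier;
  vnorm : carrier -> R;
  vadd_assoc : forall x y z, vadd x (vadd y z) = vadd (vadd x y) z;
  vadd_comm : forall x y, vadd x y = vadd y x;
  vadd_zero : forall x, vadd x vzero = x;
  vadd_opp : forall x, vadd x (vopp x) = vzero;
  vscal_one : forall x, vscal 1 x = x;
  vscal_assoc : forall a b x, vscal a (vscal b x) = vscal (a * b) x;
  vscal_distr_l : forall a x y, vscal a (vadd x y) = vadd (vscal a x) (vscal a y);
  vscal_distr_r : forall a b x, vscal (a + b) x = vadd (vscal a x) (vscal b x);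
  vnorm_nonneg : forall x, 0 <= vnorm x;
  vnorm_eq0 : forall x, vnorm x = 0 -> x = vzero;
  vnorm_scal : forall a x, vnorm (vscal a x) = Rabs a * vnorm x;
  vnorm_triangle : forall x y, vnorm (vadd x y) <= vnorm x + vnorm y
}.

Arguments vzero {_}.
Arguments vadd {_}.
Arguments vopp {_}.
Arguments vscal {_}.
Arguments vnorm {_}.

Definition vsub {X : NormedSpace} (x y : X) : X := vadd x (vopp y).

Definition complete (X : NormedSpace) : Prop :=
  forall s : nat -> X,
    (forall eps, 0 < eps -> exists N, forall m n, (N <= m)%nat -> (N <= n)%nat ->
        vnorm (vsub (s m) (s n)) < eps) ->
    exists l : X, forall eps, 0 < eps -> exists N, forall n, (N <= n)%nat ->
        vnorm (vsub (s n) l) < eps.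

Definition Banach (X : NormedSpace) : Prop := complete X.

Definition separable (X : NormedSpace) : Prop :=
  exists d : nat -> X, forall y : X, forall eps, 0 < eps ->
    exists n, vnorm (vsub (d n) y) < eps.

Definition linear_map {X Y : NormedSpace} (T : X -> Y) : Prop :=
  (forall x y, T (vadd x y) = vadd (T x) (T y)) /\
  (forall a x, T (vscal a x) = vscal a (T x)).

Definition bounded_linear_map {X Y : NormedSpace} (T : X -> Y) : Prop :=
  linear_map T /\ exists C, forall x, vnorm (T x) <= C * vnorm x.

Definition bounded_linear_functional {X : NormedSpace} (f : X -> R) : Prop :=
  (forall x y, f (vadd x y) = f x + f y) /\
  (forall a x, f (vscal a x) = a * f x) /\
  (exists C, forall x, Rabs (f x) <= C * vnorm x).

Definition weakly_null {X : NormedSpace} (s : nat -> X) : Prop :=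
  forall f : X -> R, bounded_linear_functional f -> Un_cv (fun k => f (s k)) 0.

Fixpoint vpsum {X : NormedSpace} (g : nat -> X) (m : nat) : X :=
  match m with
  | O => g O
  | S m' => vadd (vpsum g m') (g m)
  end.

Fixpoint Rmax_upto (g : nat -> R) (m : nat) : R :=
  match m with
  | O => g O
  | S m' => Rmax (Rmax_upto g m') (g (S m'))
  end.

Definition dense_in_sphere {X : NormedSpace} (x : nat -> X) : Prop :=
  (forall n, vnorm (x n) = 1) /\
  (forall y : X, vnorm y = 1 -> forall eps, 0 < eps ->
     exists n, vnorm (vsub (x n) y) < eps).

(** (E, u) is (a model of) the completion E_X of c00 under
    ||z||_{E_X} = sup_m || sum_{n<=m} z(n) x_n ||_X, with u n = e^X_n:
    E is Banach; on finitely supported vectors (support in [0,m]) the norm of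
    sum_{n<=m} a(n) u_n is the E_X-norm (for such z the sup over all m' equals
    the max over m' <= m); and span{u_n} (the image of c00) is dense in E. *)
Definition is_EX (X : NormedSpace) (x : nat -> X) (E : NormedSpace) (u : nat -> E) : Prop :=
  Banach E /\
  (forall (a : nat -> R) (m : nat),
     vnorm (vpsum (fun n => vscal (a n) (u n)) m) =
     Rmax_upto (fun m' => vnorm (vpsum (fun n => vscal (a n) (x n)) m')) m) /\
  (forall y : E, forall eps, 0 < eps ->
     exists (a : nat -> R) (m : nat),
       vnorm (vsub y (vpsum (fun n => vscal (a n) (u n)) m)) < eps).

Definition block_sequence {E : NormedSpace} (u : nat -> E) (v : nat -> E) : Prop :=
  exists (p q : nat -> nat) (a : nat -> R),
    (forall k, (p k <= q k)%nat /\ (q k < p (S k))%nat) /\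
    (forall k, v k = vpsum (fun n => if andb (Nat.leb (p k) n) (Nat.leb n (q k))
                                    then vscal (a n) (u n) else vzero) (q k)) /\
    (forall k, v k <> vzero).

Definition bounded_seq {E : NormedSpace} (v : nat -> E) : Prop :=
  exists M, forall k, vnorm (v k) <= M.

(* Main.v *)
Require Import Defs.
From Stdlib Require Import Reals Lra Lia Classical ClassicalEpsilon Arith.
Open Scope R_scope.

Section Alg.
Variable V : NormedSpace.
Implicit Types x y z a b c d : V.

Lemma add0l x : vadd vzero x = x.
Proof. rewrite vadd_comm; apply vadd_zero. Qed.

Lemma Nadd x : vadd (vopp x) x = vzero.
Proof. rewrite vadd_comm; apply vadd_opp. Qed.

Lemma add_cancel a b c : vadd a b = vadd a c -> b = c.
Proof.
  intro H. rewrite <- (add0l b), <- (add0l c), <- (Nadd a), <- !vadd_assoc, H. reflexivity.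
Qed.

Lemma add_idem a : vadd a a = a -> a = vzero.
Proof. intro H. apply (add_cancel a). rewrite H, vadd_zero. reflexivity. Qed.

Lemma scal0 x : vscal 0 x = vzero.
Proof. apply add_idem. rewrite <- vscal_distr_r. f_equal; ring. Qed.

Lemma scalz (r : R) : vscal r (@vzero V) = vzero.
Proof. apply add_idem. rewrite <- vscal_distr_l, vadd_zero. reflexivity. Qed.

Lemma scalN1 x : vscal (-1) x = vopp x.
Proof.
  apply (add_cancel x). rewrite vadd_opp. rewrite <- (vscal_one V x) at 1.
  rewrite <- vscal_distr_r. replace (1 + -1) with 0 by ring. apply scal0.
Qed.

Lemma scal_same a (r s : R) : vadd (vscal r a) (vscal s a) = vscal (r + s) a.
Proof. rewrite vscal_distr_r. reflexivity. Qed.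

Lemma scal_scal (r s : R) a : vscal r (vscal s a) = vscal (r * s) a.
Proof. apply vscal_assoc. Qed.

Lemma inv_unique a b : vadd a b = vzero -> b = vscal (-1) a.
Proof. intro H. apply (add_cancel a). rewrite H, scalN1, vadd_opp. reflexivity. Qed.

Lemma vsubE a b : vsub a b = vadd a (vscal (-1) b).
Proof. unfold vsub. rewrite scalN1. reflexivity. Qed.

Lemma swap4 a b c d : vadd (vadd a b) (vadd c d) = vadd (vadd a c) (vadd b d).
Proof.
  rewrite <- !vadd_assoc. f_equal. rewrite !vadd_assoc. f_equal. apply vadd_comm.
Qed.

Lemma vnorm_zero : vnorm (@vzero V) = 0.
Proof. rewrite <- (scal0 vzero), vnorm_scal, Rabs_R0. ring. Qed.

Lemma vnorm_N1 a : vnorm (vscal (-1) a) = vnorm a.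
Proof. rewrite vnorm_scal. replace (Rabs (-1)) with 1 by (rewrite Rabs_left; lra). ring. Qed.

Lemma vsub_zero a : vsub a vzero = a.
Proof. rewrite vsubE, scalz, vadd_zero. reflexivity. Qed.

Lemma vsub_self a : vsub a a = vzero.
Proof. apply vadd_opp. Qed.

Lemma vsub_eq a b : vsub a b = vzero -> a = b.
Proof.
  rewrite vsubE. intro H. apply inv_unique in H. apply (f_equal (vscal (-1))) in H.
  rewrite !scal_scal in H. replace (-1 * -1) with 1 in H by ring. rewrite !vscal_one in H. auto.
Qed.

Lemma vnorm_sub_sym a b : vnorm (vsub a b) = vnorm (vsub b a).
Proof.
  rewrite <- vnorm_N1. f_equal. rewrite !vsubE, vscal_distr_l, !scal_scal.
  replace (-1 * -1) with 1 by ring. rewrite vscal_one, vadd_comm. reflexivity.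
Qed.

Lemma vsub_tri a b c : vnorm (vsub a c) <= vnorm (vsub a b) + vnorm (vsub b c).
Proof.
  replace (vsub a c) with (vadd (vsub a b) (vsub b c)). apply vnorm_triangle.
  unfold vsub. rewrite <- vadd_assoc, (vadd_assoc _ (vopp b)), Nadd, add0l. reflexivity.
Qed.

Lemma chain_sub a b c d (k : R) :
  vnorm (vsub (vadd a (vscal k b)) (vadd c (vscal k d))) <=
  vnorm (vsub a c) + Rabs k * vnorm (vsub b d).
Proof.
  replace (vsub (vadd a (vscal k b)) (vadd c (vscal k d))) with
      (vadd (vsub a c) (vscal k (vsub b d))).
  - rewrite <- vnorm_scal. apply vnorm_triangle.
  - rewrite !vsubE, vscal_distr_l, (vscal_distr_l _ (-1)), !scal_scal, swap4.
    replace (k * -1) with (-1 * k) by ring. reflexivity.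
Qed.

Lemma norm_pos_neq a b : a <> b -> 0 < vnorm (vsub a b).
Proof.
  intro H. destruct (vnorm_nonneg _ (vsub a b)) as [h|h]; auto.
  exfalso. apply H, vsub_eq, vnorm_eq0. auto.
Qed.

Lemma vnorm_tri2 a b : vnorm (vadd a b) <= vnorm a + vnorm b.
Proof. apply vnorm_triangle. Qed.

End Alg.

Definition Tg {V : NormedSpace} (u : nat -> V) (a : nat -> R) (m : nat) : V :=
  vpsum (fun n => vscal (a n) (u n)) m.

Definition delta (n : nat) (c : R) : nat -> R := fun i => if Nat.eqb i n then c else 0.

Lemma vpsum_ext {V : NormedSpace} (g h : nat -> V) m :
  (forall n, (n <= m)%nat -> g n = h n) -> vpsum g m = vpsum h m.
Proof.
  induction m; intro H; simpl.
  - apply H; lia.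
  - rewrite IHm by (intros; apply H; lia). rewrite H by lia. reflexivity.
Qed.

Section TgS.
Variable V : NormedSpace.
Variable u : nat -> V.

Lemma Tg_add a b m : Tg u (fun n => a n + b n) m = vadd (Tg u a m) (Tg u b m).
Proof.
  unfold Tg; induction m; simpl.
  - apply vscal_distr_r.
  - rewrite IHm, vscal_distr_r, swap4. reflexivity.
Qed.

Lemma Tg_scal k a m : Tg u (fun n => k * a n) m = vscal k (Tg u a m).
Proof.
  unfold Tg; induction m; simpl.
  - rewrite scal_scal. reflexivity.
  - rewrite IHm, vscal_distr_l, scal_scal. reflexivity.
Qed.

Lemma Tg_ext a b m : (forall n, (n <= m)%nat -> a n = b n) -> Tg u a m = Tg u b m.
Proof. intro H. unfold Tg. apply vpsum_ext. intros n Hn. rewrite H; auto. Qed.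

Lemma Tg_zero a m : (forall n, (n <= m)%nat -> a n = 0) -> Tg u a m = vzero.
Proof.
  intro H. unfold Tg; induction m; simpl.
  - rewrite H by lia. apply scal0.
  - rewrite IHm by (intros; apply H; lia). rewrite H by lia. rewrite scal0, vadd_zero. reflexivity.
Qed.

Lemma Tg_stable a m M : (forall n, (m < n)%nat -> a n = 0) -> (m <= M)%nat -> Tg u a M = Tg u a m.
Proof.
  intros H HM. induction HM; auto.
  unfold Tg in *; simpl. rewrite IHHM, H by lia. rewrite scal0, vadd_zero. reflexivity.
Qed.

Lemma delta_out n c i : i <> n -> delta n c i = 0.
Proof. intro H. unfold delta. destruct (Nat.eqb_spec i n); [lia|auto]. Qed.

Lemma Tg_delta n c m : (n <= m)%nat -> Tg u (delta n c) m = vscal c (u n).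
Proof.
  intro H. rewrite (Tg_stable _ n m); auto.
  2:{ intros; apply delta_out; lia. }
  destruct n; unfold Tg; simpl.
  - reflexivity.
  - fold (Tg u (delta (S n) c) n). rewrite Tg_zero by (intros; apply delta_out; lia).
    rewrite add0l. unfold delta. rewrite Nat.eqb_refl. reflexivity.
Qed.

Lemma Tg_delta_lt n c m : (m < n)%nat -> Tg u (delta n c) m = vzero.
Proof. intro H. apply Tg_zero. intros; apply delta_out; lia. Qed.

End TgS.

Lemma Rmax_upto_ge g m i : (i <= m)%nat -> g i <= Rmax_upto g m.
Proof.
  induction m; intro H; simpl.
  - replace i with 0%nat by lia. lra.
  - destruct (Nat.eq_dec i (S m)).
    + subst. apply Rmax_r.
    + eapply Rle_trans; [apply IHm; lia| apply Rmax_l].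
Qed.

Lemma Rmax_upto_le g m b : (forall i, (i <= m)%nat -> g i <= b) -> Rmax_upto g m <= b.
Proof.
  induction m; intro H; simpl.
  - apply H; lia.
  - apply Rmax_lub; [apply IHm; intros; apply H; lia | apply H; lia].
Qed.

Lemma Q_Tg (X E : NormedSpace) (Q : E -> X) (x : nat -> X) (e : nat -> E)
  (HQ : linear_map Q) (HQe : forall n, Q (e n) = x n) a m :
  Q (Tg e a m) = Tg x a m.
Proof.
  destruct HQ as [Hadd Hscal]. unfold Tg; induction m; simpl.
  - rewrite Hscal, HQe. reflexivity.
  - rewrite Hadd, IHm, Hscal, HQe. reflexivity.
Qed.

Lemma fzero {E : NormedSpace} (f : E -> R) : bounded_linear_functional f -> f vzero = 0.
Proof.
  intros [_ [Hs _]]. rewrite <- (scal0 E vzero), Hs. ring.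
Qed.

Lemma fbound {E : NormedSpace} (f : E -> R) : bounded_linear_functional f ->
  exists C, 0 < C /\ forall z, Rabs (f z) <= C * vnorm z.
Proof.
  intros [_ [_ [C HC]]]. exists (Rabs C + 1). split. pose proof (Rabs_pos C); lra.
  intro z. eapply Rle_trans. apply HC. pose proof (vnorm_nonneg _ z).
  pose proof (Rle_abs C). nra.
Qed.

Lemma Dlemma (X E : NormedSpace) (x : nat -> X) (e : nat -> E)
 (Hnorm : forall a m, vnorm (Tg e a m) = Rmax_upto (fun m' => vnorm (Tg x a m')) m)
 (f : E -> R) (Hf : bounded_linear_functional f) (B eta : R) (HB : 0 <= B) (Heta : 0 < eta) :
 exists L d0, 0 < d0 /\ forall a m, (forall i, (i < L)%nat -> a i = 0) ->
   (forall i, (m < i)%nat -> a i = 0) -> vnorm (Tg e a m) <= B -> vnorm (Tg x a m) <= d0 ->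
   Rabs (f (Tg e a m)) <= eta.
Proof.
  destruct (fbound f Hf) as [C [HC0 HC]].
  pose proof Hf as [fadd [fscal _]].
  set (d0 := eta / (2 * C)).
  assert (Hd0 : 0 < d0) by (unfold d0; apply Rdiv_lt_0_compat; lra).
  apply NNPP; intro Hneg.
  assert (Hbad : forall L, exists a m, (forall i, (i < L)%nat -> a i = 0) /\
     (forall i, (m < i)%nat -> a i = 0) /\ vnorm (Tg e a m) <= B /\ vnorm (Tg x a m) <= d0 /\
     eta < Rabs (f (Tg e a m))).
  { intro L. apply NNPP; intro H. apply Hneg. exists L, d0. split; auto.
    intros a m h1 h2 h3 h4. apply Rnot_lt_le. intro h5. apply H. exists a, m. auto. }
  assert (Inv : forall J : nat, exists c m, (forall i, (m < i)%nat -> c i = 0) /\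
     (forall m', vnorm (Tg x c m') <= B + INR J * d0) /\ vnorm (Tg x c m) <= INR J * d0 /\
     INR J * eta <= f (Tg e c m)).
  { induction J.
    - exists (fun _ => 0), 0%nat. simpl. repeat split.
      + intros m'. rewrite Tg_zero by auto. rewrite vnorm_zero. lra.
      + rewrite Tg_zero by auto. rewrite vnorm_zero. lra.
      + rewrite Tg_zero by auto. rewrite (fzero f Hf). lra.
    - destruct IHJ as [c [m [Hc1 [Hc2 [Hc3 Hc4]]]]].
      destruct (Hbad (S m)) as [a [ma [Ha1 [Ha2 [Ha3 [Ha4 Ha5]]]]]].
      set (s := if Rle_dec 0 (f (Tg e a ma)) then 1 else -1).
      assert (Hs : Rabs s = 1).
      { unfold s; destruct Rle_dec; [rewrite Rabs_R1|rewrite Rabs_left by lra]; lra. }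
      assert (Hsf : eta <= s * f (Tg e a ma)).
      { unfold s; destruct Rle_dec; [rewrite Rabs_right in Ha5 by lra | rewrite Rabs_left in Ha5 by lra]; lra. }
      assert (Hsplit : forall (V : NormedSpace) (u : nat -> V) k,
                 Tg u (fun i => c i + s * a i) k = vadd (Tg u c k) (vscal s (Tg u a k))).
      { intros. rewrite Tg_add, Tg_scal. reflexivity. }
      assert (HxA : forall m', vnorm (Tg x a m') <= B).
      { intro m'. destruct (le_lt_dec m' ma).
        - eapply Rle_trans; [|apply Ha3]. rewrite Hnorm.
          apply (Rmax_upto_ge (fun m'0 => vnorm (Tg x a m'0))); auto.
        - rewrite (Tg_stable _ _ a ma m') by (auto; lia).
          eapply Rle_trans; [|apply Ha3]. rewrite Hnorm.
          apply (Rmax_upto_ge (fun m'0 => vnorm (Tg x a m'0))); auto. }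
      exists (fun i => c i + s * a i), (Nat.max m ma). rewrite S_INR. repeat split.
      + intros i Hi. rewrite Hc1, Ha2 by lia. ring.
      + intros m'. rewrite Hsplit. eapply Rle_trans; [apply vnorm_triangle|].
        rewrite vnorm_scal, Hs. destruct (le_lt_dec m' m).
        * rewrite (Tg_zero _ _ a m') by (intros; apply Ha1; lia). rewrite vnorm_zero.
          specialize (Hc2 m'). lra.
        * rewrite (Tg_stable _ _ c m m') by (auto; lia). specialize (HxA m'). lra.
      + rewrite Hsplit. eapply Rle_trans; [apply vnorm_triangle|].
        rewrite vnorm_scal, Hs.
        rewrite (Tg_stable _ _ c m) by (auto; lia). rewrite (Tg_stable _ _ a ma) by (auto; lia).
        lra.
      + rewrite Hsplit, fadd, fscal.
        rewrite (Tg_stable _ _ c m) by (auto; lia). rewrite (Tg_stable _ _ a ma) by (auto; lia).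
        lra. }
  destruct (INR_unbounded (2 * C * B / eta)) as [J HJ].
  destruct (Inv J) as [c [m [_ [Hc2 [_ Hc4]]]]].
  assert (HT : vnorm (Tg e c m) <= B + INR J * d0).
  { rewrite Hnorm. apply Rmax_upto_le. intros; apply Hc2. }
  assert (Hf1 : f (Tg e c m) <= C * (B + INR J * d0)).
  { eapply Rle_trans; [apply Rle_abs|]. eapply Rle_trans; [apply HC|]. apply Rmult_le_compat_l; lra. }
  assert (Heq : C * (INR J * d0) = INR J * eta / 2) by (unfold d0; field; lra).
  assert (HJ2 : 2 * C * B < INR J * eta).
  { apply (Rmult_lt_compat_r eta) in HJ; auto. unfold Rdiv in HJ.
    rewrite Rmult_assoc, Rinv_l, Rmult_1_r in HJ by lra. lra. }
  nra.
Qed.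

Section Pert.
Variable X : NormedSpace.
Variables z w : X.
Definition lin (p q : R) : X := vadd (vscal p z) (vscal q w).

Lemma lin_add p q r s : vadd (lin p q) (lin r s) = lin (p + r) (q + s).
Proof. unfold lin. rewrite swap4, !scal_same. reflexivity. Qed.

Lemma lin_scal k p q : vscal k (lin p q) = lin (k * p) (k * q).
Proof. unfold lin. rewrite vscal_distr_l, !scal_scal. reflexivity. Qed.

Lemma lin_dep p q : lin p q = vzero -> q <> 0 -> w = vscal (/ q * (-1 * p)) z.
Proof.
  intros H Hq. unfold lin in H. apply inv_unique in H. rewrite scal_scal in H.
  apply (f_equal (vscal (/ q))) in H. rewrite !scal_scal in H.
  rewrite Rinv_l in H by auto. rewrite vscal_one in H. auto.
Qed.

Lemma lin_norm p q : vnorm z = 1 -> vnorm w = 1 -> vnorm (lin p q) <= Rabs p + Rabs q.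
Proof.
  intros Hz Hw. unfold lin. eapply Rle_trans; [apply vnorm_triangle|].
  rewrite !vnorm_scal, Hz, Hw. lra.
Qed.

Lemma unit_mult k : vnorm z = 1 -> vnorm w = 1 -> w = vscal k z -> w = z \/ w = vscal (-1) z.
Proof.
  intros Hz Hw H. assert (Rabs k = 1) by (rewrite H, vnorm_scal, Hz in Hw; lra).
  destruct (Rcase_abs k).
  - right. rewrite Rabs_left in H0 by lra. rewrite H. f_equal. lra.
  - left. rewrite Rabs_right in H0 by lra. rewrite H. replace k with 1 by lra. apply vscal_one.
Qed.

Lemma lin_eq_pt p q p' q' : lin p q = lin p' q' -> q <> q' -> w = vscal (/ (q + -1 * q') * (-1 * (p + -1 * p'))) z.
Proof.
  intros H Hq. apply lin_dep; [|lra].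
  rewrite <- lin_add, <- lin_scal, <- H, scalN1. apply vadd_opp.
Qed.

Lemma perturb : vnorm z = 1 -> vnorm w = 1 -> w <> z -> w <> vscal (-1) z ->
  forall eps, 0 < eps -> exists z', vnorm z' = 1 /\ vnorm (vsub z' z) < eps /\
    z' <> z /\ z' <> vscal (-1) z.
Proof.
  intros Hz Hw Hwz Hwz' eps Heps.
  set (t := Rmin (1/2) (eps/8)).
  assert (Ht0 : 0 < t) by (unfold t; apply Rmin_glb_lt; lra).
  assert (Ht1 : t <= 1/2) by apply Rmin_l.
  assert (Ht2 : t <= eps/8) by apply Rmin_r.
  assert (Hz1 : z = lin 1 0) by (unfold lin; rewrite vscal_one, scal0, vadd_zero; auto).
  assert (Hz2 : vscal (-1) z = lin (-1) 0) by (unfold lin; rewrite scal0, vadd_zero; auto).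
  set (r := vnorm (lin 1 t)).
  assert (Hr1 : r <= 1 + t).
  { unfold r. eapply Rle_trans; [apply lin_norm; auto|]. rewrite Rabs_R1, Rabs_right; lra. }
  assert (Hr2 : 1 <= r + t).
  { rewrite <- Hz. rewrite Hz1. replace (lin 1 0) with (vadd (lin 1 t) (lin 0 (-t))).
    - eapply Rle_trans; [apply vnorm_triangle|]. unfold r.
      pose proof (lin_norm 0 (-t) Hz Hw). rewrite Rabs_R0, Rabs_Ropp, Rabs_right in H; lra.
    - rewrite lin_add. f_equal; ring. }
  assert (Hr0 : 0 < r) by lra.
  exists (lin (/ r * 1) (/ r * t)). rewrite <- lin_scal. split; [|split; [|split]].
  - rewrite vnorm_scal. fold r. rewrite Rabs_right. field. lra.
    left; apply Rinv_0_lt_compat; lra.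
  - rewrite lin_scal, vsubE, Hz1, lin_scal, lin_add.
    eapply Rle_lt_trans; [apply lin_norm; auto|].
    set (ri := / r). assert (ri * r = 1) by (unfold ri; field; lra).
    assert (0 < ri) by (unfold ri; apply Rinv_0_lt_compat; lra).
    replace (ri * 1 + -1 * 1) with (ri - 1) by ring. replace (ri * t + -1 * 0) with (ri * t) by ring.
    rewrite (Rabs_right (ri * t)) by nra.
    assert (ri <= 2) by nra.
    destruct (Rcase_abs (ri - 1)); [rewrite Rabs_left by lra| rewrite Rabs_right by lra]; nra.
  - intro H. rewrite lin_scal in H. rewrite Hz1 in H.
    apply lin_eq_pt in H. 2:{ assert (0 < / r * t) by (apply Rmult_lt_0_compat; auto; apply Rinv_0_lt_compat; lra). lra. }
    apply unit_mult in H; auto. destruct H; auto.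
  - intro H. rewrite lin_scal, Hz2 in H.
    apply lin_eq_pt in H. 2:{ assert (0 < / r * t) by (apply Rmult_lt_0_compat; auto; apply Rinv_0_lt_compat; lra). lra. }
    apply unit_mult in H; auto. destruct H; auto.
Qed.
End Pert.

Lemma tail_dense (X : NormedSpace) (x : nat -> X) (Hx : dense_in_sphere x) :
  forall N y, vnorm y = 1 -> forall eps, 0 < eps ->
  exists n s, (N <= n)%nat /\ Rabs s = 1 /\ vnorm (vsub (vscal s (x n)) y) < eps.
Proof.
  destruct Hx as [Hx1 Hx2].
  induction N; intros y Hy eps Heps.
  - destruct (Hx2 y Hy eps Heps) as [n Hn]. exists n, 1. rewrite vscal_one, Rabs_R1.
    repeat split; auto; lia.
  - destruct (classic (exists w, vnorm w = 1 /\ w <> y /\ w <> vscal (-1) y)) as [[w [Hw [Hw1 Hw2]]]|Hno].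
    + assert (Hy' : exists y', vnorm y' = 1 /\ vnorm (vsub y' y) < eps / 2 /\
                y' <> x N /\ y' <> vscal (-1) (x N)).
      { destruct (classic (y = x N \/ y = vscal (-1) (x N))) as [Hb|Hb].
        - destruct (perturb X y w Hy Hw Hw1 Hw2 (eps/2)) as [y' [h1 [h2 [h3 h4]]]]; [lra|].
          exists y'. repeat split; auto.
          + destruct Hb as [Hb|Hb]; intro Hc.
            * apply h3; rewrite Hb; auto.
            * apply h4. rewrite Hb, scal_scal. replace (-1 * -1) with 1 by ring.
              rewrite vscal_one. auto.
          + destruct Hb as [Hb|Hb]; intro Hc.
            * apply h4; rewrite Hb; auto.
            * apply h3; rewrite Hb; auto.
        - exists y. rewrite vsub_self, vnorm_zero. repeat split; auto; try lra;
            intro; apply Hb; auto. }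
      destruct Hy' as [y' [h1 [h2 [h3 h4]]]].
      set (rho := Rmin (vnorm (vsub (vscal 1 (x N)) y')) (vnorm (vsub (vscal (-1) (x N)) y'))).
      assert (Hrho : 0 < rho).
      { unfold rho. apply Rmin_glb_lt; apply norm_pos_neq; intro Hc; [apply h3|apply h4];
          rewrite <- Hc; try rewrite vscal_one; auto. }
      destruct (IHN y' h1 (Rmin (eps/2) rho)) as [n [s [Hn [Hs Hd]]]].
      { apply Rmin_glb_lt; lra. }
      exists n, s. split; [|split; auto].
      * destruct (Nat.eq_dec n N); [|lia]. subst n. exfalso.
        assert (Hd2 : vnorm (vsub (vscal s (x N)) y') < rho) by
          (eapply Rlt_le_trans; [apply Hd| apply Rmin_r]).
        destruct (Rcase_abs s).
        -- rewrite Rabs_left in Hs by lra. replace s with (-1) in Hd2 by lra.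
           pose proof (Rmin_r (vnorm (vsub (vscal 1 (x N)) y')) (vnorm (vsub (vscal (-1) (x N)) y'))). fold rho in H. lra.
        -- rewrite Rabs_right in Hs by lra. replace s with 1 in Hd2 by lra.
           pose proof (Rmin_l (vnorm (vsub (vscal 1 (x N)) y')) (vnorm (vsub (vscal (-1) (x N)) y'))). fold rho in H. lra.
      * eapply Rle_lt_trans; [apply (vsub_tri _ _ y')|].
        assert (vnorm (vsub (vscal s (x n)) y') < eps/2) by (eapply Rlt_le_trans; [apply Hd| apply Rmin_l]).
        lra.
    + assert (Hxs : x (S N) = y \/ x (S N) = vscal (-1) y).
      { apply NNPP. intro Hc. apply Hno. exists (x (S N)). split; auto. }
      destruct Hxs as [Hxs|Hxs].
      * exists (S N), 1. rewrite vscal_one, Hxs, vsub_self, vnorm_zero, Rabs_R1. repeat split; auto; lra.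
      * exists (S N), (-1). rewrite Hxs, scal_scal. replace (-1 * -1) with 1 by ring.
        rewrite vscal_one, vsub_self, vnorm_zero. rewrite Rabs_left by lra. repeat split; auto; lra.
Qed.

Lemma lift_ex (X : NormedSpace) (x : nat -> X) (Hx : dense_in_sphere x) :
  forall y N eps, 0 < eps -> exists n c, (N <= n)%nat /\ Rabs c = vnorm y /\
    vnorm (vsub (vscal c (x n)) y) <= eps * vnorm y.
Proof.
  intros y N eps Heps.
  destruct (vnorm_nonneg _ y) as [Hy|Hy].
  - set (r := vnorm y) in *.
    assert (Hz : vnorm (vscal (/ r) y) = 1).
    { rewrite vnorm_scal. fold r. rewrite Rabs_right. field; lra. left; apply Rinv_0_lt_compat; lra. }
    destruct (tail_dense X x Hx N _ Hz eps Heps) as [n [s [Hn [Hs Hd]]]].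
    exists n, (r * s). split; auto. split.
    + rewrite Rabs_mult, Hs, Rabs_right; lra.
    + replace (vsub (vscal (r * s) (x n)) y) with (vscal r (vsub (vscal s (x n)) (vscal (/ r) y))).
      * rewrite vnorm_scal, Rabs_right by lra. rewrite Rmult_comm. apply Rmult_le_compat_r; lra.
      * rewrite !vsubE, vscal_distr_l, !scal_scal. f_equal.
        f_equal. field. lra.
  - symmetry in Hy. pose proof (vnorm_eq0 _ _ Hy). subst y.
    exists N, 0. rewrite Rabs_R0, scal0, vsub_self, vnorm_zero. repeat split; auto. lra.
Qed.

Lemma lift_fun (X : NormedSpace) (x : nat -> X) (Hx : dense_in_sphere x) :
  exists (ln : X -> nat -> nat) (lc : X -> nat -> R), forall y j,
    (j <= ln y j)%nat /\ Rabs (lc y j) = vnorm y /\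
    vnorm (vsub (vscal (lc y j) (x (ln y j))) y) <= vnorm y / (INR j + 1).
Proof.
  assert (H : forall p : X * nat, exists q : nat * R, (snd p <= fst q)%nat /\ Rabs (snd q) = vnorm (fst p) /\
    vnorm (vsub (vscal (snd q) (x (fst q))) (fst p)) <= vnorm (fst p) / (INR (snd p) + 1)).
  { intros [y j]. simpl. destruct (lift_ex X x Hx y j (/ (INR j + 1))) as [n [c [h1 [h2 h3]]]].
    { apply Rinv_0_lt_compat. pose proof (pos_INR j). lra. }
    exists (n, c). simpl. repeat split; auto. unfold Rdiv. rewrite Rmult_comm. auto. }
  destruct (choice _ H) as [F HF].
  exists (fun y j => fst (F (y, j))), (fun y j => snd (F (y, j))). intros y j. apply (HF (y, j)).
Qed.

Definition TS {E : NormedSpace} (e : nat -> E) (L : nat) (z : E) :=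
  exists a m, z = Tg e a m /\ (forall i, (i < L)%nat -> a i = 0) /\ (forall i, (m < i)%nat -> a i = 0).

Lemma TS_single {E : NormedSpace} (e : nat -> E) L n c : (L <= n)%nat -> TS e L (vscal c (e n)).
Proof.
  intro H. exists (delta n c), n. split; [rewrite Tg_delta; auto|].
  split; intros; apply delta_out; lia.
Qed.

Lemma TS_add {E : NormedSpace} (e : nat -> E) L z1 z2 : TS e L z1 -> TS e L z2 -> TS e L (vadd z1 z2).
Proof.
  intros [a1 [m1 [h1 [h2 h3]]]] [a2 [m2 [g1 [g2 g3]]]].
  exists (fun i => a1 i + a2 i), (Nat.max m1 m2). split; [|split].
  - rewrite Tg_add, (Tg_stable _ _ a1 m1), (Tg_stable _ _ a2 m2); subst; auto; lia.
  - intros. rewrite h2, g2; auto; ring.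
  - intros. rewrite h3, g3; try lia; ring.
Qed.

Lemma TS_scal {E : NormedSpace} (e : nat -> E) L k z : TS e L z -> TS e L (vscal k z).
Proof.
  intros [a [m [h1 [h2 h3]]]]. exists (fun i => k * a i), m. split; [|split].
  - rewrite Tg_scal; subst; auto.
  - intros. rewrite h2; auto; ring.
  - intros. rewrite h3; auto; ring.
Qed.

Lemma TS_mono {E : NormedSpace} (e : nat -> E) L L' z : (L <= L')%nat -> TS e L' z -> TS e L z.
Proof.
  intros H [a [m [h1 [h2 h3]]]]. exists a, m. split; auto. split; auto. intros; apply h2; lia.
Qed.

Lemma div_mono (c : R) (i k : nat) : 0 <= c -> (k <= i)%nat -> c / (INR i + 1) <= c / (INR k + 1).
Proof.
  intros Hc Hk. apply le_INR in Hk. pose proof (pos_INR k). unfold Rdiv.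
  apply Rmult_le_compat_l; auto. apply Rinv_le_contravar; lra.
Qed.

Lemma cv_lin (A B : nat -> R) a b k : Un_cv A a -> Un_cv B b -> Un_cv (fun n => A n + k * B n) (a + k * b).
Proof.
  intros HA HB. apply CV_plus; auto.
  apply (CV_mult (fun _ => k) B k b); auto.
  intros eps Heps. exists 0%nat. intros. unfold R_dist. rewrite Rminus_diag, Rabs_R0. auto.
Qed.

Lemma lim_bound (U : nat -> R) l K : Un_cv U l -> (forall n, Rabs (U n) <= K) -> Rabs l <= K.
Proof.
  intros H HK. apply Rnot_lt_le. intro Hl.
  destruct (H (Rabs l - K)) as [N HN]; [lra|]. specialize (HN N (le_n N)). specialize (HK N).
  unfold R_dist in HN. pose proof (Rabs_triang_inv l (U N)).
  rewrite <- Rabs_Ropp in HN. replace (- (U N - l)) with (l - U N) in HN by ring. lra.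
Qed.

Section G.
Variables (X E : NormedSpace) (x : nat -> X) (e : nat -> E).
Hypothesis Hnorm : forall a m, vnorm (Tg e a m) = Rmax_upto (fun m' => vnorm (Tg x a m')) m.
Variable Q : E -> X.
Hypothesis HQ : linear_map Q.
Hypothesis HQe : forall n, Q (e n) = x n.
Variable f : E -> R.
Hypothesis Hf : bounded_linear_functional f.

Lemma KT B eta : 0 <= B -> 0 < eta -> exists L d0, 0 < d0 /\ forall z, TS e L z -> vnorm z <= B ->
  vnorm (Q z) <= d0 -> Rabs (f z) <= eta.
Proof.
  intros HB Heta. destruct (Dlemma X E x e Hnorm f Hf B eta HB Heta) as [L [d0 [Hd0 H]]].
  exists L, d0. split; auto. intros z [a [m [h1 [h2 h3]]]] h4 h5. subst z.
  rewrite (Q_Tg X E Q x e HQ HQe) in h5. apply H; auto.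
Qed.

Lemma small B K eps : 0 <= B -> 0 < eps -> exists N, forall z j, (N <= j)%nat -> TS e j z ->
  vnorm z <= B -> vnorm (Q z) <= K / (INR j + 1) -> Rabs (f z) < eps.
Proof.
  intros HB Heps. destruct (KT B (eps/2) HB) as [L [d0 [Hd0 H]]]; [lra|].
  destruct (INR_unbounded (K / d0)) as [n Hn].
  exists (Nat.max n L). intros z j Hj HT Hz HQz.
  assert (Rabs (f z) <= eps / 2); [|lra].
  apply H; auto. apply (TS_mono _ _ j); [lia|auto].
  eapply Rle_trans; [apply HQz|].
  assert (INR n <= INR j) by (apply le_INR; lia).
  assert (K < d0 * (INR j + 1)).
  { apply (Rmult_lt_compat_r d0) in Hn; auto. unfold Rdiv in Hn.
    rewrite Rmult_assoc, Rinv_l, Rmult_1_r in Hn by lra. nra. }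
  pose proof (pos_INR j).
  unfold Rdiv. apply (Rmult_le_reg_r (INR j + 1)); [lra|].
  rewrite Rmult_assoc, Rinv_l, Rmult_1_r by lra. lra.
Qed.

Lemma conv0 (w : nat -> E) B K : 0 <= B -> (forall j, vnorm (w j) <= B) ->
  (forall j, vnorm (Q (w j)) <= K / (INR j + 1)) -> (forall j, TS e j (w j)) ->
  Un_cv (fun j => f (w j)) 0.
Proof.
  intros HB Hw HQw HT eps Heps. destruct (small B K eps HB Heps) as [N HN].
  exists N. intros j Hj. unfold R_dist. rewrite Rminus_0_r. apply (HN _ j); auto.
Qed.

Variables (ln : X -> nat -> nat) (lc : X -> nat -> R).
Hypothesis Hl : forall y j, (j <= ln y j)%nat /\ Rabs (lc y j) = vnorm y /\
    vnorm (vsub (vscal (lc y j) (x (ln y j))) y) <= vnorm y / (INR j + 1).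
Hypothesis He1 : forall n, vnorm (e n) <= 1.

Definition u y j := vscal (lc y j) (e (ln y j)).

Lemma u_norm y j : vnorm (u y j) <= vnorm y.
Proof.
  unfold u. rewrite vnorm_scal. destruct (Hl y j) as [_ [h _]]. rewrite h.
  pose proof (vnorm_nonneg _ y). pose proof (He1 (ln y j)). nra.
Qed.

Lemma u_Q y j : vnorm (vsub (Q (u y j)) y) <= vnorm y / (INR j + 1).
Proof.
  unfold u. destruct HQ as [_ Hs]. rewrite Hs, HQe. apply Hl.
Qed.

Lemma u_TS y j L : (L <= j)%nat -> TS e L (u y j).
Proof. intro H. apply TS_single. destruct (Hl y j). lia. Qed.

Lemma Qadd a b : Q (vadd a b) = vadd (Q a) (Q b).
Proof. destruct HQ; auto. Qed.
Lemma Qscal k a : Q (vscal k a) = vscal k (Q a).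
Proof. destruct HQ; auto. Qed.
Lemma fadd a b : f (vadd a b) = f a + f b.
Proof. destruct Hf; auto. Qed.
Lemma fscal k a : f (vscal k a) = k * f a.
Proof. destruct Hf as [_ [h _]]; auto. Qed.

Lemma ucauchy y : Cauchy_crit (fun j => f (u y j)).
Proof.
  intros eps Heps.
  assert (HB : 0 <= 2 * vnorm y) by (pose proof (vnorm_nonneg _ y); lra).
  destruct (small (2 * vnorm y) (2 * vnorm y) eps HB Heps) as [N HN].
  exists N. intros i j Hi Hj. unfold R_dist.
  replace (f (u y i) - f (u y j)) with (f (vadd (u y i) (vscal (-1) (u y j))))
    by (rewrite fadd, fscal; ring).
  apply (HN _ (Nat.min i j)); [lia| | |].
  - apply TS_add; [|apply TS_scal]; apply u_TS; lia.
  - eapply Rle_trans; [apply vnorm_triangle|]. rewrite vnorm_N1.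
    pose proof (u_norm y i); pose proof (u_norm y j); lra.
  - rewrite <- (vsub_zero _ (Q _)). replace (@vzero X) with (vadd y (vscal (-1) y)) by (rewrite scalN1; apply vadd_opp).
    rewrite Qadd, Qscal. eapply Rle_trans; [apply chain_sub|].
    replace (Rabs (-1)) with 1 by (rewrite Rabs_left; lra). rewrite Rmult_1_l.
    pose proof (u_Q y i); pose proof (u_Q y j).
    pose proof (div_mono (vnorm y) i (Nat.min i j) (vnorm_nonneg _ y) ltac:(lia)).
    pose proof (div_mono (vnorm y) j (Nat.min i j) (vnorm_nonneg _ y) ltac:(lia)).
    unfold Rdiv in *. lra.
Qed.

Lemma g_exists : exists g : X -> R, bounded_linear_functional g /\
  forall y, Un_cv (fun j => f (u y j)) (g y).
Proof.
  assert (H : forall y, exists l, Un_cv (fun j => f (u y j)) l).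
  { intro y. destruct (R_complete _ (ucauchy y)) as [l Hl']. exists l; auto. }
  destruct (choice _ H) as [g Hg]. exists g. split; auto.
  destruct (fbound f Hf) as [C [HC0 HC]].
  split; [|split].
  - intros y z.
    assert (H0 : Un_cv (fun j => f (u (vadd y z) j) + -1 * f (u y j) + -1 * f (u z j)) 0).
    { eapply Un_cv_ext. 2:{ apply (conv0 (fun j => vadd (vadd (u (vadd y z) j) (vscal (-1) (u y j))) (vscal (-1) (u z j)))
            (vnorm (vadd y z) + vnorm y + vnorm z) (vnorm (vadd y z) + vnorm y + vnorm z)).
        - pose proof (vnorm_nonneg _ y); pose proof (vnorm_nonneg _ z); pose proof (vnorm_nonneg _ (vadd y z)); lra.
        - intro j. eapply Rle_trans; [apply vnorm_triangle|]. eapply Rle_trans; [apply Rplus_le_compat_r, vnorm_triangle|].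
          rewrite !vnorm_N1. pose proof (u_norm (vadd y z) j); pose proof (u_norm y j); pose proof (u_norm z j). lra.
        - intro j.
          assert (Z : vadd (vadd (vadd y z) (vscal (-1) y)) (vscal (-1) z) = vzero).
          { rewrite !scalN1, (vadd_comm _ y z), <- (vadd_assoc _ z y), vadd_opp, vadd_zero, vadd_opp. auto. }
          rewrite <- (vsub_zero _ (Q _)). rewrite <- Z. rewrite !Qadd, !Qscal.
          eapply Rle_trans; [apply chain_sub|]. eapply Rle_trans; [apply Rplus_le_compat_r, chain_sub|].
          replace (Rabs (-1)) with 1 by (rewrite Rabs_left; lra).
          pose proof (u_Q (vadd y z) j); pose proof (u_Q y j); pose proof (u_Q z j).
          unfold Rdiv in *. lra.
        - intro j. apply TS_add; [apply TS_add; [apply u_TS; lia| apply TS_scal, u_TS; lia] | apply TS_scal, u_TS; lia]. }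
      intro j. simpl. rewrite !fadd, !fscal. ring. }
    pose proof (cv_lin _ _ _ _ (-1) (cv_lin _ _ _ _ (-1) (Hg (vadd y z)) (Hg y)) (Hg z)).
    pose proof (UL_sequence _ _ _ H0 H1). lra.
  - intros k y.
    assert (H0 : Un_cv (fun j => f (u (vscal k y) j) + - k * f (u y j)) 0).
    { eapply Un_cv_ext. 2:{ apply (conv0 (fun j => vadd (u (vscal k y) j) (vscal (-k) (u y j)))
            (vnorm (vscal k y) + Rabs k * vnorm y) (vnorm (vscal k y) + Rabs k * vnorm y)).
        - pose proof (vnorm_nonneg _ y); pose proof (vnorm_nonneg _ (vscal k y)); pose proof (Rabs_pos k); nra.
        - intro j. eapply Rle_trans; [apply vnorm_triangle|]. rewrite vnorm_scal, Rabs_Ropp.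
          pose proof (u_norm (vscal k y) j); pose proof (u_norm y j); pose proof (Rabs_pos k). nra.
        - intro j.
          assert (Z : vadd (vscal k y) (vscal (-k) y) = vzero).
          { rewrite scal_same. replace (k + -k) with 0 by ring. apply scal0. }
          rewrite <- (vsub_zero _ (Q _)). rewrite <- Z. rewrite !Qadd, !Qscal.
          eapply Rle_trans; [apply chain_sub|]. rewrite Rabs_Ropp.
          pose proof (u_Q (vscal k y) j); pose proof (u_Q y j); pose proof (Rabs_pos k).
          assert (Rabs k * vnorm (vsub (Q (u y j)) y) <= Rabs k * (vnorm y / (INR j + 1))) by
            (apply Rmult_le_compat_l; auto).
          unfold Rdiv in *. lra.
        - intro j. apply TS_add; [apply u_TS; lia | apply TS_scal, u_TS; lia]. }
      intro j. simpl. rewrite !fadd, !fscal. ring. }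
    pose proof (cv_lin _ _ _ _ (-k) (Hg (vscal k y)) (Hg y)).
    pose proof (UL_sequence _ _ _ H0 H1). lra.
  - exists C. intro y. apply (lim_bound _ _ _ (Hg y)). intro j.
    eapply Rle_trans; [apply HC|]. apply Rmult_le_compat_l; [lra|apply u_norm].
Qed.

End G.

Theorem proposition18
  (X : NormedSpace) (HX : Banach X) (Hsep : separable X)
  (Hnz : exists y : X, y <> vzero)
  (x : nat -> X) (Hx : dense_in_sphere x)
  (E : NormedSpace) (e : nat -> E) (HE : is_EX X x E e)
  (Q : E -> X) (HQ : bounded_linear_map Q) (HQe : forall n, Q (e n) = x n)
  (v : nat -> E) (Hblock : block_sequence e v) (Hbdd : bounded_seq v) :
  weakly_null (fun k => Q (v k)) -> weakly_null v.
Proof.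
  intros Hw f Hf.
  destruct HE as [_ [Hnorm0 _]].
  assert (Hnorm : forall a m, vnorm (Tg e a m) = Rmax_upto (fun m' => vnorm (Tg x a m')) m)
    by exact Hnorm0.
  destruct HQ as [HQl [CQ HCQ]].
  assert (He1 : forall n, vnorm (e n) <= 1).
  { intro n. rewrite <- (vscal_one _ (e n)), <- (Tg_delta _ e n 1 n) by lia. rewrite Hnorm.
    apply Rmax_upto_le. intros i Hi. destruct (Nat.eq_dec i n).
    - subst. rewrite Tg_delta by lia. rewrite vscal_one, (proj1 Hx). lra.
    - rewrite Tg_delta_lt by lia. rewrite vnorm_zero. lra. }
  destruct (lift_fun X x Hx) as [ln [lc Hl]].
  destruct (g_exists X E x e Hnorm Q HQl HQe f Hf ln lc Hl He1) as [g [Hg Hgcv]].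
  pose proof (Hw g Hg) as Hgv. simpl in Hgv.
  destruct Hbdd as [M HM].
  assert (HM0 : 0 <= M) by (pose proof (vnorm_nonneg _ (v 0%nat)); specialize (HM 0%nat); lra).
  set (CQ' := Rabs CQ).
  assert (HQv : forall k, vnorm (Q (v k)) <= CQ' * M).
  { intro k. eapply Rle_trans; [apply HCQ|]. pose proof (vnorm_nonneg _ (v k)).
    pose proof (Rle_abs CQ). pose proof (Rabs_pos CQ). specialize (HM k). unfold CQ'. nra. }
  destruct Hblock as [p [q [a [Hpq [Hv _]]]]].
  assert (Hpk : forall k, (k <= p k)%nat).
  { induction k; [lia|]. destruct (Hpq k). lia. }
  assert (HTSv : forall k L, (L <= p k)%nat -> TS e L (v k)).
  { intros k L HL. exists (fun i => if andb (Nat.leb (p k) i) (Nat.leb i (q k)) then a i else 0), (q k).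
    split; [|split].
    - rewrite Hv. unfold Tg. apply vpsum_ext. intros n Hn.
      destruct (andb _ _); [reflexivity| rewrite scal0; reflexivity].
    - intros i Hi. destruct (Nat.leb_spec (p k) i); [lia|reflexivity].
    - intros i Hi. destruct (Nat.leb_spec i (q k)); [lia|]. rewrite Bool.andb_false_r. reflexivity. }
  assert (Hdiff : Un_cv (fun k => f (v k) - g (Q (v k))) 0).
  { intros eps Heps.
    assert (HB : 0 <= M + CQ' * M) by (unfold CQ'; pose proof (Rabs_pos CQ); nra).
    destruct (small X E x e Hnorm Q HQl HQe f Hf (M + CQ' * M) (CQ' * M) (eps/2) HB ltac:(lra)) as [N HN].
    exists N. intros k Hk.
    destruct (Hgcv (Q (v k)) (eps/2)) as [J0 HJ0]; [lra|].
    set (j := Nat.max J0 N).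
    set (w := vadd (v k) (vscal (-1) (u X E e ln lc (Q (v k)) j))).
    assert (Hfw : Rabs (f w) < eps/2).
    { apply (HN w (Nat.min j (p k))).
      - specialize (Hpk k). lia.
      - apply TS_add. apply HTSv; lia. apply TS_scal. apply TS_single.
        destruct (Hl (Q (v k)) j). lia.
      - unfold w. eapply Rle_trans; [apply vnorm_triangle|]. rewrite vnorm_N1.
        unfold u. rewrite vnorm_scal. destruct (Hl (Q (v k)) j) as [_ [h _]]. rewrite h.
        pose proof (He1 (ln (Q (v k)) j)). pose proof (vnorm_nonneg _ (Q (v k))).
        specialize (HM k). specialize (HQv k). nra.
      - unfold w, u. destruct HQl as [Qa Qs]. rewrite Qa, !Qs, HQe.
        rewrite (scalN1 _ (vscal _ _)). fold (vsub (Q (v k)) (vscal (lc (Q (v k)) j) (x (ln (Q (v k)) j)))).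
        rewrite vnorm_sub_sym. eapply Rle_trans; [apply Hl|].
        eapply Rle_trans; [apply (div_mono _ j (Nat.min j (p k))); [apply vnorm_nonneg|lia]|].
        unfold Rdiv. apply Rmult_le_compat_r; [|apply HQv].
        left; apply Rinv_0_lt_compat. pose proof (pos_INR (Nat.min j (p k))). lra. }
    assert (Hfw' : f w = f (v k) - f (u X E e ln lc (Q (v k)) j)).
    { unfold w. destruct Hf as [fa [fs _]]. rewrite fa, fs. ring. }
    specialize (HJ0 j ltac:(unfold j; lia)). unfold R_dist in *.
    rewrite Hfw' in Hfw. rewrite Rminus_0_r.
    replace (f (v k) - g (Q (v k))) with ((f (v k) - f (u X E e ln lc (Q (v k)) j)) +
      (f (u X E e ln lc (Q (v k)) j) - g (Q (v k)))) by ring.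
    eapply Rle_lt_trans; [apply Rabs_triang|]. lra. }
  pose proof (CV_plus _ _ _ _ Hdiff Hgv). rewrite Rplus_0_r in H.
  eapply Un_cv_ext; [|apply H]. intro k. simpl. ring.
Qed.
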